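(* Let $N\ge1$, let $G=(\mathcal{V},\mathcal{E},P_V)$ and $\tilde G_i=(\mathcal{V}_i,\mathcal{E}_i,P_{V_i})$, $i\le N$, be probabilistic graphs with $G=\bigsqcup_{i\le N}\tilde G_i$ and $\tilde G_1\simeq\tilde G_2\simeq\dots\simeq\tilde G_N$. Then $H_\chi(G)=H_\chi(\tilde G_1)$.
   Context: A probabilistic graph is $(\mathcal{V},\mathcal{E},P_V)$: a finite graph with a probability distribution $P_V$ on its vertices. A coloring is a map $c$ from the vertices to a finite set such that adjacent vertices get different colors; $H_\chi(G)=\inf\{H(c(V)):c\text{ a coloring of }G\}$ with $V\sim P_V$. $G=\bigsqcup_{i\le N}\tilde G_i$ (disjoint union) means: $\mathcal{V}$ is the disjoint union of the $\mathcal{V}_i$; for $v\in\mathcal{V}_i$, $v'\in\mathcal{V}_{i'}$, if $i=i'$ then $vv'\in\mathcal{E}\iff vv'\in\mathcal{E}_i$, and if $i\ne i'$ then $vv'\notin\mathcal{E}$; and $P_{V\mid V\in\mathcal{V}_i}=P_{V_i}$ for all $i$. $G_1\simeq G_2$ (isomorphic probabilistic graphs) means there is a bijection $\psi:\mathcal{V}_1\to\mathcal{V}_2$ with $v v'\in\mathcal{E}_1\iff\psi(v)\psi(v')\in\mathcal{E}_2$ and $P_{V_1}(v)=P_{V_2}(\psi(v))$ for all $v$. *)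

(* Defs.v *)
From HB Require Import structures.
From mathcomp Require Import all_boot all_order all_algebra.
From mathcomp Require Import all_classical all_reals all_analysis.
Set Implicit Arguments. Unset Strict Implicit. Unset Printing Implicit Defensive.
Import Order.TTheory GRing.Theory Num.Theory.
Local Open Scope classical_set_scope.
Local Open Scope ring_scope.

Definition is_pgraph (R : realType) (T : finType) (e : rel T) (P : T -> R) : Prop :=
  symmetric e /\ irreflexive e /\ (forall v, 0 <= P v) /\ \sum_(v : T) P v = 1.

(* A coloring: adjacent vertices receive different colors.  Colors are natural
   numbers; since T is finite, any such map has a finite image. *)
Definition is_coloring (T : finType) (e : rel T) (c : T -> nat) : Prop :=
  forall u v, e u v -> c u != c v.

Definition pushmass (R : realType) (T : finType) (P : T -> R) (c : T -> nat) (y : nat) : R :=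
  \sum_(v : T | c v == y) P v.

(* Shannon entropy (natural log, 0 log 0 = 0 since ln 0 = 0) of c(V). *)
Definition entropy (R : realType) (T : finType) (P : T -> R) (c : T -> nat) : R :=
  - \sum_(y <- undup [seq c v | v <- enum T]) pushmass P c y * ln (pushmass P c y).

Definition chrom_entropy (R : realType) (T : finType) (e : rel T) (P : T -> R) : R :=
  inf [set entropy P c | c in [set c : T -> nat | is_coloring e c]].

Definition pg_iso (R : realType) (T1 T2 : finType) (e1 : rel T1) (P1 : T1 -> R)
    (e2 : rel T2) (P2 : T2 -> R) : Prop :=
  exists psi : T1 -> T2, bijective psi /\
    (forall u v, e1 u v = e2 (psi u) (psi v)) /\ (forall v, P1 v = P2 (psi v)).

(* G = disjoint union of the G_i (i < N): the vertex set of G is the disjoint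
   union of the (embedded) vertex sets of the G_i, edges inside a part are those
   of G_i, there are no edges between distinct parts, and the conditional law of
   V given V in V_i is P_{V_i} (which requires P(V in V_i) > 0). *)
Definition pg_disjoint_union (R : realType) (N : nat) (T : finType) (e : rel T) (P : T -> R)
    (Ti : 'I_N -> finType) (ei : forall i, rel (Ti i)) (Pi : forall i, Ti i -> R) : Prop :=
  exists emb : forall i, Ti i -> T,
    (forall i, injective (emb i)) /\
    (forall i j (x : Ti i) (y : Ti j), emb i x = emb j y -> i = j) /\
    (forall v, exists i, exists x : Ti i, emb i x = v) /\
    (forall i (x y : Ti i), e (emb i x) (emb i y) = ei i x y) /\
    (forall i j (x : Ti i) (y : Ti j), i != j -> ~~ e (emb i x) (emb j y)) /\
    (forall i, 0 < \sum_(x : Ti i) P (emb i x) /\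
       forall x : Ti i, Pi i x = P (emb i x) / \sum_(x' : Ti i) P (emb i x')).

(* Main.v *)
Require Import Defs.
From HB Require Import structures.
From mathcomp Require Import all_boot all_order all_algebra.
From mathcomp Require Import all_classical all_reals all_analysis.
From mathcomp Require Import lra.
Import Order.TTheory GRing.Theory Num.Theory.
Local Open Scope ring_scope.

Section Gen.
Variable R : realType.

Lemma entropyE (T : finType) (P : T -> R) (c : T -> nat) :
  entropy P c = - \sum_(v : T) P v * ln (pushmass P c (c v)).
Proof.
rewrite /entropy; congr (- _).
set s := undup _.
transitivity (\sum_(y <- s) \sum_(v : T)
   (if c v == y then P v * ln (pushmass P c (c v)) else 0)).
  apply: eq_bigr => y _; rewrite /pushmass big_distrl /= big_mkcond /=.
  by apply: eq_bigr => v _; case: eqP => // ->.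
rewrite exchange_big /=; apply: eq_bigr => v _.
rewrite (bigD1_seq (c v)) /=; last exact: undup_uniq.
  rewrite eqxx big1 ?addr0 // => y; rewrite eq_sym => /negbTE ->; done.
by rewrite mem_undup map_f ?mem_enum.
Qed.

Lemma pushmass_ge (T : finType) (P : T -> R) (c : T -> nat) v :
  (forall v, 0 <= P v) -> P v <= pushmass P c (c v).
Proof.
move=> P0; rewrite /pushmass (bigD1 v) ?eqxx //= lerDl.
by apply: sumr_ge0 => *; apply: P0.
Qed.

Lemma pushmass_le (T : finType) (P : T -> R) (c : T -> nat) y :
  (forall v, 0 <= P v) -> pushmass P c y <= \sum_v P v.
Proof.
move=> P0; rewrite /pushmass big_mkcond /=; apply: ler_sum => v _.
by case: ifP => // _; apply: P0.
Qed.

Lemma entropy_ge0 (T : finType) (P : T -> R) (c : T -> nat) :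
  (forall v, 0 <= P v) -> \sum_v P v = 1 -> 0 <= entropy P c.
Proof.
move=> P0 P1; rewrite entropyE oppr_ge0; apply: sumr_le0 => v _; apply: mulr_ge0_le0 => //; apply: ln_le0.
by rewrite -P1; apply: pushmass_le.
Qed.

Lemma entropy_bij (T1 T2 : finType) (f : T1 -> T2) (g : T2 -> T1)
  (fg : cancel f g) (gf : cancel g f) (P2 : T2 -> R) (c : T2 -> nat) :
  entropy (P2 \o f) (c \o f) = entropy P2 c.
Proof.
have bf (Q : pred T2) : {on Q, bijective f} by apply: onW_bij; exists g.
have pm y : pushmass (P2 \o f) (c \o f) y = pushmass P2 c y.
  by rewrite /pushmass [RHS](reindex f) //; apply: bf.
rewrite !entropyE; congr (- _).
rewrite [RHS](reindex f) /=; last exact: bf.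
by apply: eq_bigr => v _; rewrite pm.
Qed.

Lemma ln_ineq (z : R) : 0 < z -> 1 + ln z <= z.
Proof. by move=> z0; rewrite -{2}(lnK (x := z)) ?posrE //; apply: expR_ge1Dx. Qed.

End Gen.

Theorem lemma2 (R : realType) (n : nat) (T : finType) (e : rel T) (P : T -> R)
    (Ti : 'I_n.+1 -> finType) (ei : forall i, rel (Ti i)) (Pi : forall i, Ti i -> R) :
  is_pgraph e P ->
  (forall i, is_pgraph (ei i) (Pi i)) ->
  pg_disjoint_union e P ei Pi ->
  (forall i, pg_iso (ei ord0) (Pi ord0) (ei i) (Pi i)) ->
  chrom_entropy e P = chrom_entropy (ei ord0) (Pi ord0).
Proof.
move=> [_ [irrG [P0 P1]]] Hpi [emb [Hinj [Hdisj [Hsurj [Hein [Heout Hmass]]]]]] Hiso.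
have [dec Hdec] : {dec : T -> {i : 'I_n.+1 & Ti i} |
    forall v, emb (tag (dec v)) (tagged (dec v)) = v}.
  have H v : exists p : {i : 'I_n.+1 & Ti i}, emb (tag p) (tagged p) = v.
    by have [i [x <-]] := Hsurj v; exists (Tagged Ti x).
  by exists (fun v => sval (cid (H v))) => v; exact: (svalP (cid (H v))).
have dec_emb i x : dec (emb i x) = Tagged Ti x.
  have := Hdec (emb i x); case: (dec (emb i x)) => j y /= H.
  have ji := Hdisj _ _ _ _ H; subst j; by rewrite (Hinj _ _ _ H).
have decomp (F : T -> R) : \sum_v F v = \sum_i \sum_(x : Ti i) F (emb i x).
  rewrite (sig_big_dep xpredT (fun i => xpredT) (fun i x => F (emb i x))) /=.
  rewrite (reindex (fun p : {i : 'I_n.+1 & Ti i} => emb (tag p) (tagged p))) //.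
  apply: onW_bij; exists dec => [[i x]|v]; [exact: dec_emb | exact: Hdec].
pose p i := \sum_(x : Ti i) P (emb i x).
have p0 i : 0 < p i by case: (Hmass i).
have PE i x : P (emb i x) = p i * Pi i x.
  by case: (Hmass i) => h ->; rewrite mulrC divfK // gt_eqF.
have sp1 : \sum_i p i = 1 by rewrite -P1 decomp.
have Pi0 i x : 0 <= Pi i x by case: (Hpi i) => _ [_ [h _]]; exact: h.
have [psi Hpsi] : {psi : forall i, Ti ord0 -> Ti i | forall i, bijective (psi i) /\
    (forall u v, ei ord0 u v = ei i (psi i u) (psi i v)) /\
    (forall v, Pi ord0 v = Pi i (psi i v))}.
  by exists (fun i => sval (cid (Hiso i))) => i; exact: (svalP (cid (Hiso i))).
have [phi Hphi] : {phi : forall i, Ti i -> Ti ord0 |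
    forall i, cancel (psi i) (phi i) /\ cancel (phi i) (psi i)}.
  have H i : exists g, cancel (psi i) g /\ cancel g (psi i).
    by case: (Hpsi i) => [[g h1 h2] _]; exists g.
  by exists (fun i => sval (cid (H i))) => i; exact: (svalP (cid (H i))).
have transport (g : Ti ord0 -> R) :
    \sum_i \sum_(x : Ti i) P (emb i x) * g (phi i x) = \sum_a Pi ord0 a * g a.
  transitivity (\sum_i p i * \sum_a Pi ord0 a * g a); last first.
    by rewrite -big_distrl /= sp1 mul1r.
  apply: eq_bigr => i _; rewrite big_distrr /=.
  rewrite [RHS](reindex (phi i)) /=; last first.
    by apply: onW_bij; exists (psi i); case: (Hphi i).
  apply: eq_bigr => x _; rewrite PE -mulrA; congr (_ * (_ * _)).
  by case: (Hpsi i) => _ [_ ->]; case: (Hphi i) => _ ->.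
have lbG : has_lbound [set entropy P c | c in [set c | is_coloring e c]].
  by exists 0 => y [c _ <-]; exact: entropy_ge0.
have lb1 : has_lbound [set entropy (Pi ord0) c | c in [set c | is_coloring (ei ord0) c]].
  exists 0 => y [c _ <-]; case: (Hpi ord0) => _ [_ [h1 h2]]; exact: entropy_ge0.
have ne1 : ([set entropy (Pi ord0) c | c in [set c | is_coloring (ei ord0) c]] !=set0)%classic.
  exists (entropy (Pi ord0) (fun a => nat_of_ord (enum_rank a))).
  exists (fun a => nat_of_ord (enum_rank a)) => //.
  move=> u v huv; apply/eqP => /val_inj /enum_rank_inj euv; move: huv; rewrite euv.
  by case: (Hpi ord0) => _ [irr _]; rewrite irr.
have neG : ([set entropy P c | c in [set c | is_coloring e c]] !=set0)%classic.
  exists (entropy P (fun a => nat_of_ord (enum_rank a))).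
  exists (fun a => nat_of_ord (enum_rank a)) => //.
  move=> u v huv; apply/eqP => /val_inj /enum_rank_inj euv; move: huv; rewrite euv.
  by rewrite irrG.
rewrite /chrom_entropy; apply/eqP; rewrite eq_le; apply/andP; split.
  apply: (lb_le_inf ne1); move=> y [d dcol <-].
  pose c v := d (phi (tag (dec v)) (tagged (dec v))).
  have cE i x : c (emb i x) = d (phi i x) by rewrite /c dec_emb.
  have ccol : is_coloring e c.
    move=> u v; rewrite -(Hdec u) -(Hdec v).
    case: (dec u) => i x; case: (dec v) => j z /=.
    case: (eqVneq i j) => [ij|ij]; first subst j.
      rewrite Hein !cE => h; apply: dcol.
      by case: (Hpsi i) => _ [-> _]; case: (Hphi i) => _ H2; rewrite !H2.
    by move=> h; have := Heout _ _ x z ij; rewrite h.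
  have pmE k : pushmass P c k = pushmass (Pi ord0) d k.
    rewrite /pushmass big_mkcond /= decomp [RHS]big_mkcond /=.
    transitivity (\sum_i \sum_(x : Ti i) P (emb i x) *
                    (if d (phi i x) == k then 1 else 0)).
      by apply: eq_bigr => i _; apply: eq_bigr => x _; rewrite cE; case: ifP;
        rewrite ?mulr1 ?mulr0.
    by rewrite (transport (fun a => if d a == k then 1 else 0)); apply: eq_bigr => a _; case: ifP; rewrite ?mulr1 ?mulr0.
  have -> : entropy (Pi ord0) d = entropy P c.
    rewrite !entropyE decomp; congr (- _).
    rewrite -(transport (fun a => ln (pushmass (Pi ord0) d (d a)))).
    by apply: eq_bigr => i _; apply: eq_bigr => x _; rewrite cE pmE.
  by apply: (ge_inf lbG); exists c.
apply: (lb_le_inf neG); move=> y [c ccol <-].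
have Hi i : inf [set entropy (Pi ord0) c | c in [set c | is_coloring (ei ord0) c]]
            <= entropy (Pi i) (c \o emb i).
  have dcol : is_coloring (ei ord0) (c \o emb i \o psi i).
    by move=> u v; case: (Hpsi i) => _ [-> _]; rewrite /= -Hein; exact: ccol.
  have E1 : entropy (Pi ord0) (c \o emb i \o psi i) = entropy (Pi i) (c \o emb i).
    have -> : Pi ord0 = Pi i \o psi i by apply: funext => a; case: (Hpsi i) => _ [_ ->].
    case: (Hphi i) => h1 h2; exact: (@entropy_bij R _ _ (psi i) (phi i) h1 h2).
  rewrite -E1; apply: (ge_inf lb1); by exists (c \o emb i \o psi i).
have gibbs i : entropy (Pi i) (c \o emb i) <=
    - \sum_(x : Ti i) Pi i x * ln (pushmass P c (c (emb i x))).
  rewrite entropyE lerN2 -subr_ge0 -sumrB.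
  have bnd : \sum_(x : Ti i) Pi i x * (pushmass P c (c (emb i x)) /
                pushmass (Pi i) (c \o emb i) (c (emb i x))) <= 1.
    have -> : \sum_(x : Ti i) Pi i x * (pushmass P c (c (emb i x)) /
                pushmass (Pi i) (c \o emb i) (c (emb i x))) =
      \sum_(x : Ti i) \sum_(v : T) (if c v == c (emb i x) then
        P v * (Pi i x / pushmass (Pi i) (c \o emb i) (c (emb i x))) else 0).
      apply: eq_bigr => x _; rewrite mulrCA /pushmass big_distrl big_mkcond /=.
      by apply: eq_bigr => v _; case: ifP.
    rewrite exchange_big /= -P1; apply: ler_sum => v _.
    have -> : \sum_(x : Ti i) (if c v == c (emb i x) then
        P v * (Pi i x / pushmass (Pi i) (c \o emb i) (c (emb i x))) else 0) =
        P v * (pushmass (Pi i) (c \o emb i) (c v) / pushmass (Pi i) (c \o emb i) (c v)).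
      rewrite /pushmass [X in _ = _ * (X / _)]big_mkcond /= big_distrl big_distrr /=.
      apply: eq_bigr => x _; rewrite eq_sym; case: eqP => [->|_] //.
      by rewrite mul0r mulr0.
    apply: ler_piMr => //.
    case: (eqVneq (pushmass (Pi i) (c \o emb i) (c v)) 0) => [->|nz].
      by rewrite mul0r.
    by rewrite mulfV.
  apply: (@le_trans _ _ (\sum_(x : Ti i) Pi i x * (1 - pushmass P c (c (emb i x)) /
                pushmass (Pi i) (c \o emb i) (c (emb i x))))).
    rewrite (eq_bigr (fun x => Pi i x - Pi i x * (pushmass P c (c (emb i x)) /
                pushmass (Pi i) (c \o emb i) (c (emb i x))))); last first.
      by move=> x _; rewrite mulrBr mulr1.
    rewrite sumrB subr_ge0; case: (Hpi i) => _ [_ [_ ->]]; exact: bnd.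
  apply: ler_sum => x _; rewrite -mulrBr /=.
  have := Pi0 i x; rewrite le_eqVlt => /orP [/eqP <-|px]; first by rewrite !mul0r.
  apply: ler_wpM2l; first exact: ltW.
  have mi0 : 0 < pushmass (Pi i) (c \o emb i) (c (emb i x)).
    by apply: (lt_le_trans px); apply: pushmass_ge; exact: Pi0.
  have m0 : 0 < pushmass P c (c (emb i x)).
    apply: (@lt_le_trans _ _ (P (emb i x))); first by rewrite PE mulr_gt0.
    by apply: pushmass_ge.
  have := @ln_ineq R _ (divr_gt0 m0 mi0); rewrite ln_div ?posrE // /=.
  move=> h; lra.
rewrite entropyE decomp.
have -> : - \sum_i \sum_(x : Ti i) P (emb i x) * ln (pushmass P c (c (emb i x))) =
    \sum_i p i * (- \sum_(x : Ti i) Pi i x * ln (pushmass P c (c (emb i x)))).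
  rewrite -sumrN; apply: eq_bigr => i _; rewrite mulrN big_distrr /=; congr (- _).
  by apply: eq_bigr => x _; rewrite PE mulrA.
apply: (@le_trans _ _ (\sum_i p i *
   inf [set entropy (Pi ord0) c | c in [set c | is_coloring (ei ord0) c]])).
  by rewrite -big_distrl /= sp1 mul1r.
apply: ler_sum => i _; rewrite ler_pM2l //; exact: le_trans (Hi i) (gibbs i).
Qed.
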